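(* Let $(V,\langle\cdot\,,\cdot\rangle_V)$ be an admissible module and $\Omega_1,\ldots,\Omega_l$ symmetric linear operators on $V$ with $\Omega_k^2=-\mathrm{Id}_V$ for all $k$ and $\Omega_k\Omega_j=-\Omega_j\Omega_k$ for all $k\neq j$. Let $P$ be a linear operator on $V$ with $P^2=\mathrm{Id}_V$ and $P\Omega_k=\Omega_kP$ for $k=1,\ldots,l$. If $w\in V$ satisfies $Pw=w$ and $\langle w,w\rangle_V=1$, then there is a vector $\tilde w\in V$ with $\langle\tilde w,\tilde w\rangle_V=1$, $\langle\tilde w,\Omega_k\tilde w\rangle_V=0$ for all $k=1,\ldots,l$, and $P\tilde w=\tilde w$.
   Context: A scalar product is a real symmetric non-degenerate bilinear form. A linear operator $\Omega$ on $V$ is symmetric if $\langle\Omega v,w\rangle_V=\langle v,\Omega w\rangle_V$ for all $v,w$. An admissible module is a real vector space $V$ which is a module over a Clifford algebra $\mathrm{Cl}_{r,s}$ (generated by $\mathbb R^{r,s}$ with $z^2=-\langle z,z\rangle\cdot1$), with representation $z\mapsto J_z$, together with a scalar product $\langle\cdot\,,\cdot\rangle_V$ satisfying $\langle J_zu,v\rangle_V=-\langle u,J_zv\rangle_V$ for all $z\in\mathbb R^{r,s}$, $u,v\in V$. *)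

(* Defs.v *)
(* Finite-dimensional real vector space V = 'cV[R]_n, R : realType. *)
From HB Require Import structures.
From mathcomp Require Import all_boot all_order all_algebra.
From mathcomp Require Import reals.
Set Implicit Arguments. Unset Strict Implicit. Unset Printing Implicit Defensive.
Import Order.TTheory GRing.Theory Num.Theory.
Local Open Scope ring_scope.

Definition sp (R : realType) (n : nat) (S : 'M[R]_n) (u v : 'cV[R]_n) : R :=
  (u^T *m S *m v) 0 0.

Definition scalar_product (R : realType) (n : nat) (S : 'M[R]_n) : Prop :=
  S^T = S /\ S \in unitmx.

Definition qf_rs (R : realType) (r s : nat) (z : 'rV[R]_(r + s)) : R :=
  \sum_(i < r + s) (if (i < r)%N then 1 else -1) * z 0 i ^+ 2.

(* J_z = sum_i z_i J(e_i) : the linear map z |-> J_z determined by images of the basis *)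
Definition Jz (R : realType) (r s n : nat) (J : 'I_(r + s) -> 'M[R]_n)
  (z : 'rV[R]_(r + s)) : 'M[R]_n := \sum_(i < r + s) z 0 i *: J i.

Definition clifford_module (R : realType) (r s n : nat) (J : 'I_(r + s) -> 'M[R]_n) : Prop :=
  forall z : 'rV[R]_(r + s), Jz J z *m Jz J z = - (qf_rs z)%:M.

Definition admissible_module (R : realType) (r s n : nat)
  (S : 'M[R]_n) (J : 'I_(r + s) -> 'M[R]_n) : Prop :=
  [/\ scalar_product S, clifford_module J &
      forall (z : 'rV[R]_(r + s)) (u v : 'cV[R]_n),
        sp S (Jz J z *m u) v = - sp S u (Jz J z *m v)].

Definition symmetric_op (R : realType) (n : nat) (S A : 'M[R]_n) : Prop :=
  forall v w : 'cV[R]_n, sp S (A *m v) w = sp S v (A *m w).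

(* Main.v *)
Require Import Defs.
From HB Require Import structures.
From mathcomp Require Import all_boot all_order all_algebra.
From mathcomp Require Import reals.
From mathcomp Require Import ring lra.
Import Order.TTheory GRing.Theory Num.Theory.
Local Open Scope ring_scope.

Section L.
Variables (R : realType) (n : nat) (S : 'M[R]_n).
Lemma spDl u1 u2 v : sp S (u1 + u2) v = sp S u1 v + sp S u2 v.
Proof. by rewrite /sp linearD /= !mulmxDl mxE. Qed.
Lemma spDr u v1 v2 : sp S u (v1 + v2) = sp S u v1 + sp S u v2.
Proof. by rewrite /sp !mulmxDr mxE. Qed.
Lemma spZl a u v : sp S (a *: u) v = a * sp S u v.
Proof. by rewrite /sp linearZ /= -!scalemxAl mxE. Qed.
Lemma spZr a u v : sp S u (a *: v) = a * sp S u v.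
Proof. by rewrite /sp -!scalemxAr mxE. Qed.
Lemma spNr u v : sp S u (- v) = - sp S u v.
Proof. by rewrite -scaleN1r spZr mulN1r. Qed.
Lemma sp_sym u v : S^T = S -> sp S u v = sp S v u.
Proof.
move=> hS; have e : (u^T *m S *m v)^T = v^T *m S^T *m u.
  by rewrite !trmx_mul trmxK mulmxA.
by rewrite hS in e; rewrite /sp -e [RHS]mxE.
Qed.
End L.

Section Step.
Variables (R : realType) (n l : nat) (S : 'M[R]_n) (Om : 'I_l -> 'M[R]_n) (P : 'M[R]_n).
Hypotheses (hS : S^T = S) (hsym : forall k, symmetric_op S (Om k))
  (hsq : forall k, Om k *m Om k = - 1%:M)
  (hanti : forall k j, k != j -> Om k *m Om j = - (Om j *m Om k))
  (hP : forall k, P *m Om k = Om k *m P).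

Lemma step (i : 'I_l) v : P *m v = v -> 0 < sp S v v ->
  exists x, [/\ P *m x = x, 0 < sp S x x, sp S x (Om i *m x) = 0 &
    forall j, j != i -> sp S v (Om j *m v) = 0 -> sp S x (Om j *m x) = 0].
Proof.
move=> Pv Npos.
set N := sp S v v; set b := sp S v (Om i *m v).
have NP : 0 < N := Npos.
set m := Num.sqrt (N ^+ 2 + b ^+ 2).
have m0 : 0 <= m by apply: sqrtr_ge0.
have hm : m ^+ 2 = N ^+ 2 + b ^+ 2 by rewrite sqr_sqrtr // addr_ge0 // sqr_ge0.
set a := N + m.
have hb2 : b ^+ 2 = m ^+ 2 - N ^+ 2 by rewrite hm; ring.
set x := a *: v + b *: (Om i *m v).
have F1 : sp S (Om i *m v) v = b by rewrite sp_sym.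
have F2 : sp S (Om i *m v) (Om i *m v) = - N.
  by rewrite hsym mulmxA hsq mulNmx mul1mx spNr.
have Ox : Om i *m x = a *: (Om i *m v) - b *: v.
  by rewrite /x mulmxDr -!scalemxAr mulmxA hsq mulNmx mul1mx scalerN.
exists x; split.
- by rewrite /x mulmxDr -!scalemxAr mulmxA hP -mulmxA Pv.
- rewrite /x !(spDl, spDr, spZl, spZr) F1 F2 -/N -/b.
  have -> : a * (a * N + b * b) + b * (a * b + b * - N)
            = (a ^+ 2 - b ^+ 2) * N + 2 * a * b ^+ 2 by ring.
  rewrite hb2 /a; have -> : ((N + m) ^+ 2 - (m ^+ 2 - N ^+ 2)) * N + 2 * (N + m) * (m ^+ 2 - N ^+ 2) = 2 * (N+m) * m ^+2 by ring.
  apply: mulr_gt0; first by lra.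
  rewrite hm; have := sqr_ge0 b; have : 0 < N ^+ 2 by rewrite exprn_gt0. lra.
- rewrite Ox /x !(spDl, spDr, spZl, spZr, spNr) F1 F2 -/N -/b.
  apply: (@eq_trans _ _ ((a ^+ 2 - b ^+ 2) * b - 2 * a * b * N)); first by ring.
  by rewrite hb2 /a; ring.
- move=> j ji bj.
  have G1 : sp S (Om i *m v) (Om j *m v) = - sp S v (Om j *m (Om i *m v)).
    by rewrite hsym !mulmxA hanti 1?eq_sym // mulNmx spNr.
  have G2 : sp S (Om i *m v) (Om j *m (Om i *m v)) = sp S v (Om j *m v).
    by rewrite hsym !mulmxA hanti 1?eq_sym // mulNmx -(mulmxA (Om j)) hsq
      mulmxN mulmx1 ?mulNmx ?opprK ?spNr ?opprK.
  rewrite /x mulmxDr -!scalemxAr !(spDl, spDr, spZl, spZr) G1 G2 bj.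
  ring.
Qed.
End Step.

Theorem corollary2p10 (R : realType) (r s n l : nat)
  (S : 'M[R]_n) (J : 'I_(r + s) -> 'M[R]_n)
  (Om : 'I_l -> 'M[R]_n) (P : 'M[R]_n) (w : 'cV[R]_n) :
  admissible_module S J ->
  (forall k, symmetric_op S (Om k)) ->
  (forall k, Om k *m Om k = - 1%:M) ->
  (forall k j, k != j -> Om k *m Om j = - (Om j *m Om k)) ->
  P *m P = 1%:M ->
  (forall k, P *m Om k = Om k *m P) ->
  P *m w = w -> sp S w w = 1 ->
  exists wt : 'cV[R]_n,
    [/\ sp S wt wt = 1, (forall k, sp S wt (Om k *m wt) = 0) & P *m wt = wt].
Proof.
move=> [[hS _] _ _] hsym hsq hanti _ hP Pw w1.
have H : forall m, exists v, [/\ P *m v = v, 0 < sp S v v &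
   forall k : 'I_l, (k < m)%N -> sp S v (Om k *m v) = 0].
  elim => [|m [v [Pv Nv Hv]]].
    by exists w; split => //; rewrite w1 ltr01.
  case: (ltnP m l) => ml.
    have [x [Px Nx Xi Xj]] := @step R n l S Om P hS hsym hsq hanti hP (Ordinal ml) v Pv Nv.
    exists x; split => // k; rewrite ltnS leq_eqVlt; case/orP => [/eqP e| km].
      by have -> : k = Ordinal ml by apply: val_inj.
    by apply: Xj; [rewrite -val_eqE /= neq_ltn km | exact: Hv].
  exists v; split => // k km; apply: Hv; exact: leq_trans (ltn_ord k) ml.
have [v [Pv Nv Hv]] := H l.
set N := sp S v v in Nv.
have sN : Num.sqrt N ^+ 2 = N by rewrite sqr_sqrtr // ltW.
have s0 : 0 < Num.sqrt N by rewrite sqrtr_gt0.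
exists ((Num.sqrt N)^-1 *: v); split.
- rewrite spZl spZr -/N -[X in _ * (_ * X)]sN; field.
  by rewrite lt0r_neq0.
- by move=> k; rewrite -scalemxAr spZl spZr Hv // !mulr0.
- by rewrite -scalemxAr Pv.
Qed.
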